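(* Let $\phi:\mathbb{R}^4\to\mathbb{R}^4$ be an arbitrary map. The following are equivalent: (a) $\phi$ is continuous, satisfies $\langle r_1-r_2,r_1-r_2\rangle=0\Rightarrow\langle\phi(r_1)-\phi(r_2),\phi(r_1)-\phi(r_2)\rangle=0$ for all $r_1,r_2\in\mathbb{R}^4$, and its range is included in a light cone. (b) There exist a countable set $J$, a family $(U_j)_{j\in J}$ of pairwise disjoint open subsets of $\mathbb{R}^4$, a family $(s_j)_{j\in J}$ of vectors of $\mathcal{Q}$, a point $s'\in\mathbb{R}^4$ and a continuous map $f:\mathbb{R}^4\to\mathbb{R}$ such that: (i) for all distinct $j,j'\in J$ and all $r\in U_j$, $r'\in U_{j'}$, one has $\langle r-r',r-r'\rangle\neq0$; (ii) $f$ vanishes everywhere on $\mathbb{R}^4\setminus\bigcup_{j\in J}U_j$; (iii) for all $r\in\mathbb{R}^4$, $\phi(r)=s'+f(r)\,s_j$ if $r\in U_j$ (for some $j\in J$), and $\phi(r)=s'$ otherwise.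
   Context: $\mathbb{R}^4=\{(x,y,z,t)\}$ carries its standard topology and the inner product $\langle (x,y,z,t),(u,v,w,s)\rangle=-xu-yv-zw+ts$. For $r\in\mathbb{R}^4$, the light cone with vertex $r$ is $\{s: \langle s-r,s-r\rangle=0\}$. $\mathcal{Q}=\{(x,y,z,1): x^2+y^2+z^2=1\}$. *)

(* Defs.v *)
From HB Require Import structures.
From mathcomp Require Import all_boot all_order all_algebra.
From mathcomp Require Import all_classical all_reals all_analysis.
Set Implicit Arguments. Unset Strict Implicit. Unset Printing Implicit Defensive.
Import Order.TTheory GRing.Theory Num.Theory.
Local Open Scope ring_scope.
Local Open Scope classical_set_scope.

(* the k-th coordinate (k = 0,1,2,3 <-> x,y,z,t) of a vector of R^4 *)
Definition cd {R : realType} (k : nat) (r : 'rV[R]_4) : R := r ord0 (inord k).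

Definition mink {R : realType} (r s : 'rV[R]_4) : R :=
  - (cd 0 r * cd 0 s) - cd 1 r * cd 1 s - cd 2 r * cd 2 s + cd 3 r * cd 3 s.

Definition light_cone {R : realType} (r : 'rV[R]_4) : set 'rV[R]_4 :=
  [set s | mink (s - r) (s - r) = 0].

Definition Qset {R : realType} : set 'rV[R]_4 :=
  [set s | cd 3 s = 1 /\ cd 0 s ^+ 2 + cd 1 s ^+ 2 + cd 2 s ^+ 2 = 1].

(* Main.v *)
Require Import Defs.
From HB Require Import structures.
From mathcomp Require Import all_boot all_order all_algebra.
From mathcomp Require Import all_classical all_reals all_analysis.
From mathcomp Require Import ring lra.
Set Implicit Arguments. Unset Strict Implicit. Unset Printing Implicit Defensive.
Import Order.TTheory GRing.Theory Num.Theory.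
Import numFieldNormedType.Exports.
Local Open Scope ring_scope.
Local Open Scope classical_set_scope.
Section Alg.
Variable R : realType.
Local Notation V := 'rV[R]_4.

Lemma cdD k (u v : V) : cd k (u + v) = cd k u + cd k v.
Proof. by rewrite /cd mxE. Qed.
Lemma cdN k (u : V) : cd k (- u) = - cd k u.
Proof. by rewrite /cd mxE. Qed.
Lemma cdB k (u v : V) : cd k (u - v) = cd k u - cd k v.
Proof. by rewrite cdD cdN. Qed.
Lemma cdZ k a (u : V) : cd k (a *: u) = a * cd k u.
Proof. by rewrite /cd mxE. Qed.
Lemma cd0 k : cd k (0 : V) = 0.
Proof. by rewrite /cd mxE. Qed.

Lemma vec_eq (u v : V) : (forall k, (k < 4)%N -> cd k u = cd k v) -> u = v.
Proof.
move=> H; apply/rowP => i; have := H i (ltn_ord i).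
by rewrite /cd inord_val [ord0]ord1 => ->; rewrite -[i in v _ i]inord_val.
Qed.

Lemma vec_eq4 (u v : V) : cd 0 u = cd 0 v -> cd 1 u = cd 1 v -> cd 2 u = cd 2 v ->
  cd 3 u = cd 3 v -> u = v.
Proof.
move=> h0 h1 h2 h3; apply: vec_eq => -[|[|[|[|k]]]] //.
Qed.

Lemma minkE (u : V) : mink u u =
  - cd 0 u ^+ 2 - cd 1 u ^+ 2 - cd 2 u ^+ 2 + cd 3 u ^+ 2.
Proof. by rewrite /mink !expr2. Qed.

Lemma minkZ a (u : V) : mink (a *: u) (a *: u) = a ^+ 2 * mink u u.
Proof. rewrite !minkE !cdZ; ring. Qed.

Lemma mink0 : mink (0 : V) 0 = 0.
Proof. rewrite minkE !cd0; ring. Qed.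

Lemma null_t0 (u : V) : mink u u = 0 -> cd 3 u = 0 -> u = 0.
Proof.
rewrite minkE => H h3.
have h0 : cd 0 u = 0 by apply/eqP; rewrite -sqrf_eq0; apply/eqP; nra.
have h1 : cd 1 u = 0 by apply/eqP; rewrite -sqrf_eq0; apply/eqP; nra.
have h2 : cd 2 u = 0 by apply/eqP; rewrite -sqrf_eq0; apply/eqP; nra.
by apply: vec_eq4; rewrite ?cd0.
Qed.

Lemma Q_null (n : V) : Qset n -> mink n n = 0.
Proof. move=> [h3 hs]; rewrite minkE h3; lra. Qed.

Lemma sq3 (a b c : R) : a ^+ 2 + b ^+ 2 + c ^+ 2 = 0 -> [/\ a = 0, b = 0 & c = 0].
Proof.
move=> H; have ha := sqr_ge0 a; have hb := sqr_ge0 b; have hc := sqr_ge0 c.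
have A : a ^+ 2 = 0 by lra.
have B : b ^+ 2 = 0 by lra.
have C : c ^+ 2 = 0 by lra.
by split; apply/eqP; rewrite -sqrf_eq0; apply/eqP.
Qed.

Definition dirv (v : V) : V := (cd 3 v)^-1 *: v.

Lemma dir_Q (v : V) : mink v v = 0 -> cd 3 v != 0 -> Qset (dirv v).
Proof.
rewrite minkE => H h3; split; rewrite /dirv !cdZ ?mulVf //.
have E : cd 0 v ^+ 2 + cd 1 v ^+ 2 + cd 2 v ^+ 2 = cd 3 v ^+ 2 by lra.
by rewrite !exprMn -!mulrDr E -exprMn mulVf // expr1n.
Qed.

Lemma dirvK (v : V) : cd 3 v != 0 -> v = cd 3 v *: dirv v.
Proof. by move=> h; rewrite /dirv scalerA mulfV // scale1r. Qed.

Lemma Q_eq (n m : V) a b : Qset n -> Qset m -> a != 0 -> b != 0 ->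
  mink (a *: n - b *: m) (a *: n - b *: m) = 0 -> n = m.
Proof.
move=> [n3 ns] [m3 ms] a0 b0; rewrite minkE !cdB !cdZ n3 m3 => H.
set d := cd 0 n * cd 0 m + cd 1 n * cd 1 m + cd 2 n * cd 2 m.
have E : 2 * a * b * (d - 1) = 0.
  have Id : - (a * cd 0 n - b * cd 0 m) ^+ 2 - (a * cd 1 n - b * cd 1 m) ^+ 2
     - (a * cd 2 n - b * cd 2 m) ^+ 2 + (a * 1 - b * 1) ^+ 2 =
     2 * a * b * (d - 1) - a ^+ 2 * ((cd 0 n ^+ 2 + cd 1 n ^+ 2 + cd 2 n ^+ 2) - 1)
     - b ^+ 2 * ((cd 0 m ^+ 2 + cd 1 m ^+ 2 + cd 2 m ^+ 2) - 1) by rewrite /d; ring.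
  by rewrite ns ms !subrr !mulr0 !subr0 in Id; rewrite -Id.
have d1 : d = 1.
  apply/eqP; rewrite -subr_eq0; move/eqP: E; rewrite !mulf_eq0 (negbTE a0) (negbTE b0).
  by rewrite pnatr_eq0 /=.
have S : (cd 0 n - cd 0 m) ^+ 2 + (cd 1 n - cd 1 m) ^+ 2 + (cd 2 n - cd 2 m) ^+ 2 = 0.
  have Id : (cd 0 n - cd 0 m) ^+ 2 + (cd 1 n - cd 1 m) ^+ 2 + (cd 2 n - cd 2 m) ^+ 2 =
    (cd 0 n ^+ 2 + cd 1 n ^+ 2 + cd 2 n ^+ 2) + (cd 0 m ^+ 2 + cd 1 m ^+ 2 + cd 2 m ^+ 2) - 2 * d
    by rewrite /d; ring.
  by rewrite Id ns ms d1; ring.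
have [e0 e1 e2] := sq3 S.
apply: vec_eq4; first 3 last; first by rewrite n3 m3.
- by apply/eqP; rewrite -subr_eq0 e0.
- by apply/eqP; rewrite -subr_eq0 e1.
- by apply/eqP; rewrite -subr_eq0 e2.
Qed.

Definition mk4 (a b c d : R) : V := \row_(i < 4) nth 0 [:: a; b; c; d] i.
Lemma mk4E a b c d :
  [/\ cd 0 (mk4 a b c d) = a, cd 1 (mk4 a b c d) = b, cd 2 (mk4 a b c d) = c
     & cd 3 (mk4 a b c d) = d].
Proof. by rewrite /cd !mxE !inordK. Qed.

Definition v1 := mk4 (2^-1) 0 0 (2^-1).
Definition v2 := mk4 (- 2^-1) 0 0 (2^-1).
Definition v3 := mk4 0 1 0 1.
Definition v4 := mk4 0 0 1 1.
Lemma v_null : [/\ mink v1 v1 = 0, mink v2 v2 = 0, mink v3 v3 = 0 & mink v4 v4 = 0].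
Proof.
rewrite !minkE /v1 /v2 /v3 /v4 /mk4 /cd !mxE !inordK //=.
split; lra.
Qed.

Definition c1 (r x : V) := cd 0 (x - r) + cd 3 (x - r) - cd 1 (x - r) - cd 2 (x - r).
Definition c2 (r x : V) := cd 3 (x - r) - cd 1 (x - r) - cd 2 (x - r) - cd 0 (x - r).
Definition c3 (r x : V) := cd 1 (x - r).
Definition c4 (r x : V) := cd 2 (x - r).
Definition p1 r x := r + c1 r x *: v1.
Definition p2 r x := p1 r x + c2 r x *: v2.
Definition p3 r x := p2 r x + c3 r x *: v3.

Lemma p4E r x : x - p3 r x = c4 r x *: v4.
Proof.
rewrite /p3 /p2 /p1 /c1 /c2 /c3 /c4 /v1 /v2 /v3 /v4.
apply: vec_eq4; rewrite !(cdB, cdD, cdZ) /mk4 /cd !mxE !inordK //=.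
- lra.
- lra.
- lra.
- lra.
Qed.
End Alg.
Section Fwd.
Variable R : realType.
Local Notation V := 'rV[R]_4.
Variable phi : V -> V.
Variable r0 : V.
Hypothesis Hc : continuous phi.
Hypothesis Hp : forall r1 r2 : V, mink (r1 - r2) (r1 - r2) = 0 ->
      mink (phi r1 - phi r2) (phi r1 - phi r2) = 0.
Hypothesis Hr0 : forall r, mink (phi r - r0) (phi r - r0) = 0.

Definition ff (r : V) : R := cd 3 (phi r - r0).
Definition dd (r : V) : V := dirv (phi r - r0).

Lemma cd_cont k : continuous (cd k : V -> R).
Proof. move=> x; exact: coord_continuous. Qed.

Lemma ff_cont : continuous ff.
Proof.
move=> x; apply: (@continuous_comp _ _ _ (fun r => phi r - r0) (cd 3)); last exact: cd_cont.
exact: (cvgB (@Hc x) (cvg_cst r0)).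
Qed.

Lemma ddQ r : ff r != 0 -> Qset (dd r).
Proof. by move=> h; apply: dir_Q. Qed.

Lemma ddK r : ff r != 0 -> phi r = r0 + ff r *: dd r.
Proof. by move=> h; rewrite /dd /ff -dirvK // addrC subrK. Qed.

Lemma ff0 r : ff r = 0 -> phi r = r0.
Proof. by move=> h; apply/eqP; rewrite -subr_eq0; apply/eqP; apply: null_t0. Qed.

Lemma dd_eq p q : ff p != 0 -> ff q != 0 -> mink (p - q) (p - q) = 0 -> dd p = dd q.
Proof.
move=> hp hq /Hp; rewrite (ddK hp) (ddK hq) opprD addrACA subrr add0r.
move=> H; exact: (Q_eq (ddQ hp) (ddQ hq) hp hq H).
Qed.

Lemma near_W (h : V -> V) r : h x @[x --> r] --> r -> ff r != 0 ->
  \forall x \near r, ff (h x) != 0.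
Proof.
move=> hc hr; exact: (cvgr_neq0 _ (cvg_comp h ff hc (@ff_cont r)) hr).
Qed.


Lemma cc k (r : V) : cd k (y - r) @[y --> r] --> (0 : R).
Proof.
have h1 : (y - r) @[y --> r] --> (0 : V).
  have := cvgB (@cvg_id _ (nbhs r)) (cvg_cst r); rewrite subrr; apply; exact: nbhs_filter.
have := cvg_comp _ _ h1 (@cd_cont k 0); by rewrite cd0.
Qed.

Lemma dd_loc r : ff r != 0 -> \forall x \near r, ff x != 0 /\ dd x = dd r.
Proof.
move=> hr.
have hc1 : c1 r y @[y --> r] --> (0 : R).
  have := cvgB (cvgB (cvgD (cc 0 r) (cc 3 r)) (cc 1 r)) (cc 2 r).
  by rewrite !subr0 addr0; apply; exact: nbhs_filter.
have hc2 : c2 r y @[y --> r] --> (0 : R).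
  have := cvgB (cvgB (cvgB (cc 3 r) (cc 1 r)) (cc 2 r)) (cc 0 r).
  by rewrite !subr0; apply; exact: nbhs_filter.
have hc3 : c3 r y @[y --> r] --> (0 : R) by exact: cc.
have hp1 : p1 r y @[y --> r] --> r.
  have := cvgD (cvg_cst r) (cvgZ hc1 (cvg_cst (@v1 R))).
  by rewrite scale0r addr0; apply; exact: nbhs_filter.
have hp2 : p2 r y @[y --> r] --> r.
  have := cvgD hp1 (cvgZ hc2 (cvg_cst (@v2 R))).
  by rewrite scale0r addr0; apply; exact: nbhs_filter.
have hp3 : p3 r y @[y --> r] --> r.
  have := cvgD hp2 (cvgZ hc3 (cvg_cst (@v3 R))).
  by rewrite scale0r addr0; apply; exact: nbhs_filter.
near=> x.
have W1 : ff (p1 r x) != 0 by near: x; exact: near_W.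
have W2 : ff (p2 r x) != 0 by near: x; exact: near_W.
have W3 : ff (p3 r x) != 0 by near: x; exact: near_W.
have W4 : ff x != 0 by near: x; apply: (near_W (h := id)) => //; exact: cvg_id.
case: (@v_null R) => n1 n2 n3 n4.
split => //.
rewrite (dd_eq W4 W3); last by rewrite p4E minkZ n4 mulr0.
rewrite (dd_eq W3 W2); last by rewrite /p3 [p2 r x + _]addrC addrK minkZ n3 mulr0.
rewrite (dd_eq W2 W1); last by rewrite /p2 [p1 r x + _]addrC addrK minkZ n2 mulr0.
rewrite (dd_eq W1 hr) //; by rewrite /p1 [r + _]addrC addrK minkZ n1 mulr0.
Unshelve. all: by end_near.
Qed.

End Fwd.
Lemma rat_dense4 (R : realType) (A : set 'rV[R]_4) : open A -> A !=set0 ->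
  exists q : 'rV[rat]_4, A (map_mx ratr q).
Proof.
move=> oA [x Ax].
have /nbhs_ballP[e e0 eA] : nbhs x A by apply: open_nbhs_nbhs; split.
have : forall j : 'I_4, exists q : rat, ratr q \in `](x ord0 j), (x ord0 j + e)[%R.
  by move=> j; apply: rat_in_itvoo; rewrite ltrDl.
move=> /choice[qf hq]; exists (\row_j qf j); apply: eA; split => // i j.
rewrite [i]ord1 !mxE /ball /=.
have := hq j; rewrite in_itv /= => /andP[h1 h2].
rewrite ltr_norml; apply/andP; split; lra.
Qed.
Lemma fwd (R : realType) (phi : 'rV[R]_4 -> 'rV[R]_4) :
  continuous phi ->
  (forall r1 r2 : 'rV[R]_4,
      mink (r1 - r2) (r1 - r2) = 0 ->
      mink (phi r1 - phi r2) (phi r1 - phi r2) = 0) ->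
  (exists r : 'rV[R]_4, range phi `<=` light_cone r) ->
  (exists (J : Type) (U : J -> set 'rV[R]_4) (s : J -> 'rV[R]_4)
          (s' : 'rV[R]_4) (f : 'rV[R]_4 -> R),
     countable [set: J] /\
         (forall j, open (U j)) /\
         (forall j j', j <> j' -> U j `&` U j' = set0) /\
         (forall j, Qset (s j)) /\
         continuous f /\
         (forall j j' r r', j <> j' -> U j r -> U j' r' ->
            mink (r - r') (r - r') <> 0) /\
         (forall r, ~ (\bigcup_j U j) r -> f r = 0)  /\
         (forall r, (forall j, U j r -> phi r = s' + f r *: s j) /\
                    (~ (\bigcup_j U j) r -> phi r = s'))).
Proof.
move=> Hc Hp [r0 Hr].
have Hr0 : forall r, mink (phi r - r0) (phi r - r0) = 0.
  by move=> r; exact: (Hr _ (imageT phi r)).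
pose J := {n : 'rV[R]_4 | `[< exists r, ff phi r0 r != 0 /\ dd phi r0 r = n >]}.
pose U := fun j : J => [set r | ff phi r0 r != 0 /\ dd phi r0 r = val j].
have H7 : forall r, ~ (\bigcup_j U j) r -> ff phi r0 r = 0.
  move=> r hn; apply/eqP; apply: contra_notT hn => h.
  have hj : `[< exists r', ff phi r0 r' != 0 /\ dd phi r0 r' = dd phi r0 r >].
    by apply/asboolP; exists r.
  by exists (exist _ (dd phi r0 r) hj).
have oU : forall j, open (U j).
  move=> j; rewrite openE => x [hx ex].
  have := dd_loc Hc Hp Hr0 hx.
  by apply: filterS => y [h1 h2]; split => //; rewrite h2.
have neU : forall j, U j !=set0.
  by move=> j; have /asboolP[r [h1 h2]] := valP j; exists r.
exists J, U, (fun j => val j), r0, (ff phi r0).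
split.
  apply/countable_injP.
  have /choice[g hg] : forall j : J, exists q : 'rV[rat]_4, U j (map_mx ratr q).
    by move=> j; apply: rat_dense4.
  exists (fun j => pickle (g j)) => j j' _ _ e0.
  have e : g j = g j' := pcan_inj pickleK e0.
  have := hg j; have := hg j'; rewrite e => -[_ e1] [_ e2].
  by apply: val_inj; rewrite -e1 -e2.
split => //.
split.
  move=> j j' hne; rewrite -subset0 => y [[_ e1] [_ e2]]; apply: hne.
  by apply: val_inj; rewrite -e1 -e2.
split.
  by move=> j; have /asboolP[r [h1 <-]] := valP j; exact: ddQ.
split; first exact: ff_cont.
split.
  move=> j j' r r' hne [h1 e1] [h2 e2] hm; apply: hne; apply: val_inj.
  by rewrite -e1 -e2; exact: dd_eq.
split => // r; split.
  by move=> j [h1 <-]; exact: ddK.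
by move=> hn; apply: ff0 => //; exact: H7.
Qed.
Lemma Q_bound (R : realType) (n : 'rV[R]_4) : Qset n -> forall i k, `|n i k| <= 1.
Proof.
move=> [h3 hs] i k; rewrite [i]ord1 -[k]inord_val.
have := ltn_ord k; move: (nat_of_ord k) => m.
have a0 := sqr_ge0 (cd 0 n); have a1 := sqr_ge0 (cd 1 n); have a2 := sqr_ge0 (cd 2 n).
case: m => [|[|[|[|m]]]] // _.
- change (`|cd 0 n| <= 1); rewrite ler_norml; apply/andP; split; nra.
- change (`|cd 1 n| <= 1); rewrite ler_norml; apply/andP; split; nra.
- change (`|cd 2 n| <= 1); rewrite ler_norml; apply/andP; split; nra.
- by change (`|cd 3 n| <= 1); rewrite h3 normr1.
Qed.
Lemma bwd (R : realType) (phi : 'rV[R]_4 -> 'rV[R]_4) :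
  (exists (J : Type) (U : J -> set 'rV[R]_4) (s : J -> 'rV[R]_4)
          (s' : 'rV[R]_4) (f : 'rV[R]_4 -> R),
     countable [set: J] /\
         (forall j, open (U j)) /\
         (forall j j', j <> j' -> U j `&` U j' = set0) /\
         (forall j, Qset (s j)) /\
         continuous f /\
         (forall j j' r r', j <> j' -> U j r -> U j' r' ->
            mink (r - r') (r - r') <> 0) /\
         (forall r, ~ (\bigcup_j U j) r -> f r = 0)  /\
         (forall r, (forall j, U j r -> phi r = s' + f r *: s j) /\
                    (~ (\bigcup_j U j) r -> phi r = s'))) ->
  (continuous phi /\
   (forall r1 r2 : 'rV[R]_4,
      mink (r1 - r2) (r1 - r2) = 0 ->
      mink (phi r1 - phi r2) (phi r1 - phi r2) = 0) /\
   (exists r : 'rV[R]_4, range phi `<=` light_cone r)).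
Proof.
move=> [J [U [s [s' [f [hc [ho [hd [hQ [hf [hi [h0 hphi]]]]]]]]]]]].
have Ein j r : U j r -> phi r = s' + f r *: s j by move=> h; exact: (hphi r).1 j h.
have Eout r : ~ (\bigcup_j U j) r -> phi r = s' by exact: (hphi r).2.
split; last split.
- move=> r; case: (pselect ((\bigcup_j U j) r)) => [[j _ hj]|hn].
  + have nb : nbhs r (U j) by apply: open_nbhs_nbhs; split.
    have H : \forall y \near r, s' + f y *: s j = phi y.
      by apply: filterS nb => y hy; rewrite (Ein j y hy).
    apply: cvg_trans (near_eq_cvg H) _.
    rewrite (Ein j r hj).
    exact: (cvgD (cvg_cst s') (cvgZ (@hf r) (cvg_cst (s j)))).
  + rewrite /continuous_at (Eout r hn).
    apply/(@cvg_ballP _ _ _ _ (nbhs_filter r)) => e e0.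
    have hf0 := @hf r; rewrite /continuous_at (h0 r hn) in hf0.
    move/(@cvg_ballP _ _ _ _ (nbhs_filter r)): hf0 => /(_ e e0).
    apply: filterS => y hy; split => // i k.
    case: (pselect ((\bigcup_j U j) y)) => [[j _ hj]|hn'].
    * rewrite (Ein j y hj) /ball /= !mxE opprD addrA subrr sub0r normrN normrM.
      move: hy; rewrite /ball /= sub0r normrN => hy.
      have := Q_bound (hQ j) i k.
      move=> hb; apply: (le_lt_trans _ hy).
      by rewrite -[X in _ <= X]mulr1 ler_wpM2l.
    * by rewrite (Eout y hn') /ball /= subrr normr0.
- move=> r1 r2 hm.
  case: (pselect ((\bigcup_j U j) r1)) => [[j1 _ h1]|n1];
  case: (pselect ((\bigcup_j U j) r2)) => [[j2 _ h2]|n2].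
  + case: (pselect (j1 = j2)) => [e|ne]; last by case: (hi _ _ _ _ ne h1 h2).
    subst j2; rewrite (Ein _ _ h1) (Ein _ _ h2) opprD addrACA subrr add0r -scalerBl.
    by rewrite minkZ Q_null // mulr0.
  + by rewrite (Ein _ _ h1) (Eout _ n2) [s' + _]addrC addrK minkZ Q_null // mulr0.
  + rewrite (Eout _ n1) (Ein _ _ h2) opprD addrA subrr sub0r -scaleNr.
    by rewrite minkZ Q_null // mulr0.
  + by rewrite (Eout _ n1) (Eout _ n2) subrr mink0.
- exists s' => _ [r _ <-]; rewrite /light_cone /=.
  case: (pselect ((\bigcup_j U j) r)) => [[j _ hj]|hn].
  + by rewrite (Ein _ _ hj) [s' + _]addrC addrK minkZ Q_null // mulr0.
  + by rewrite (Eout _ hn) subrr mink0.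
Qed.

Unset Implicit Arguments.

Theorem proposition3p1 (R : realType) (phi : 'rV[R]_4 -> 'rV[R]_4) :
  (continuous phi /\
   (forall r1 r2 : 'rV[R]_4,
      mink (r1 - r2) (r1 - r2) = 0 ->
      mink (phi r1 - phi r2) (phi r1 - phi r2) = 0) /\
   (exists r : 'rV[R]_4, range phi `<=` light_cone r))
  <->
  (exists (J : Type) (U : J -> set 'rV[R]_4) (s : J -> 'rV[R]_4)
          (s' : 'rV[R]_4) (f : 'rV[R]_4 -> R),
     countable [set: J] /\
         (forall j, open (U j)) /\
         (forall j j', j <> j' -> U j `&` U j' = set0) /\
         (forall j, Qset (s j)) /\
         continuous f /\
         (forall j j' r r', j <> j' -> U j r -> U j' r' ->
            mink (r - r') (r - r') <> 0) /\
         (forall r, ~ (\bigcup_j U j) r -> f r = 0)  /\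
         (forall r, (forall j, U j r -> phi r = s' + f r *: s j) /\
                    (~ (\bigcup_j U j) r -> phi r = s'))).
Proof.
split; first by move=> [h1 [h2 h3]]; exact: fwd.
exact: bwd.
Qed.
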